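(* Let $\Omega = \bigcap_{j=1}^n \{x \in \mathbb{R}^d : a_j^{\intercal} x \leq b_j\}$ be a convex polytope of unit diameter containing the origin in its interior, where each $a_j$ is a unit vector and $b_j > 0$. Let $\varepsilon > 0$ and define the lifted body and the expanded body in $\mathbb{R}^{d+1}$ $$\widehat{\Omega} = \{(x;z) : z \geq 0,\ z \leq b_j - a_j^{\intercal}x \ \forall j\},\qquad \widehat{\Omega}^+ = \{(x;z) : z \leq b_j - a_j^{\intercal}x + \varepsilon \ \forall j\}.$$ Let $0 < \lambda_c < 1$. Then there is a constant $c > 0$ depending only on $\lambda_c$ and $d$ such that for every point $p \in \widehat{\Omega}$, the Macbeath ellipsoid $E^{\lambda_c}_{\widehat{\Omega}^+}(p)$ contains the Euclidean ball of radius $c\,\varepsilon$ centered at $p$.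
   Context: For a convex set $K$, a point $p \in K$ and $\lambda > 0$, the $\lambda$-scaled Macbeath region is $M^{\lambda}_K(p) = p + \lambda\big((K - p) \cap (p - K)\big)$, and the Macbeath ellipsoid $E^{\lambda}_K(p)$ is the maximum-volume ellipsoid contained in $M^{\lambda}_K(p)$ (it is centered at $p$). In the paper's data structure these ellipsoids (with centers in $\widehat{\Omega}$) are the covering ellipsoids. *)

(* Defs.v *)
From HB Require Import structures.
From mathcomp Require Import all_boot all_order all_algebra.
From mathcomp Require Import classical_sets reals.
Set Implicit Arguments. Unset Strict Implicit. Unset Printing Implicit Defensive.
Import Order.TTheory GRing.Theory Num.Theory.
Local Open Scope ring_scope.
Local Open Scope classical_set_scope.

Definition dotp (R : realType) (k : nat) (u v : 'rV[R]_k) : R :=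
  \sum_(i < k) u 0 i * v 0 i.

Definition enorm (R : realType) (k : nat) (v : 'rV[R]_k) : R :=
  Num.sqrt (dotp v v).

Definition eball (R : realType) (k : nat) (c : 'rV[R]_k) (r : R) : set 'rV[R]_k :=
  [set x | enorm (x - c) <= r].

Definition polytope (R : realType) (d n : nat) (a : 'I_n -> 'rV[R]_d)
  (b : 'I_n -> R) : set 'rV[R]_d :=
  [set x | forall j, dotp (a j) x <= b j].

(* R^{d+1} = 'rV_(d+1); a point (x;z) is row_mx x z, with x = lsubmx y,
   z = rsubmx y 0 0. *)
Definition lifted (R : realType) (d n : nat) (a : 'I_n -> 'rV[R]_d)
  (b : 'I_n -> R) : set 'rV[R]_(d + 1) :=
  [set y | 0 <= rsubmx y 0 0 /\
           forall j, rsubmx y 0 0 <= b j - dotp (a j) (lsubmx y)].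

Definition expanded (R : realType) (d n : nat) (a : 'I_n -> 'rV[R]_d)
  (b : 'I_n -> R) (eps : R) : set 'rV[R]_(d + 1) :=
  [set y | forall j, rsubmx y 0 0 <= b j - dotp (a j) (lsubmx y) + eps].

Definition macbeath (R : realType) (k : nat) (K : set 'rV[R]_k) (p : 'rV[R]_k)
  (lam : R) : set 'rV[R]_k :=
  [set p + lam *: v | v in [set v | K (p + v) /\ K (p - v)]].

(* Ellipsoid with center c and linear map A: { c + u A : |u| <= 1 }.
   Its volume is |det A| times the volume of the unit ball. *)
Definition ellipsoid (R : realType) (k : nat) (c : 'rV[R]_k) (A : 'M[R]_k)
  : set 'rV[R]_k :=
  [set c + u *m A | u in [set u | enorm u <= 1]].

Definition max_vol_ellipsoid_in (R : realType) (k : nat) (S : set 'rV[R]_k)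
  (c : 'rV[R]_k) (A : 'M[R]_k) : Prop :=
  ellipsoid c A `<=` S /\
  forall c' A', ellipsoid c' A' `<=` S -> `|\det A'| <= `|\det A|.

(* Main.v *)
Require Import Defs.
From HB Require Import structures.
From mathcomp Require Import all_boot all_order all_algebra.
From mathcomp Require Import classical_sets reals.
From mathcomp Require Import ring lra.
Import Order.TTheory GRing.Theory Num.Theory.
Local Open Scope ring_scope.
Local Open Scope classical_set_scope.
Set Implicit Arguments. Unset Strict Implicit. Unset Printing Implicit Defensive.

Section Basics.
Variable R : realType.
Variable k : nat.
Local Notation n := k.
Implicit Types u v w : 'rV[R]_k.

Lemma dotpC u v : dotp u v = dotp v u.
Proof. by apply: eq_bigr => i _; rewrite mulrC. Qed.

Lemma dotpDl u v w : dotp (u + v) w = dotp u w + dotp v w.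
Proof. by rewrite /dotp -big_split; apply: eq_bigr => i _; rewrite !mxE mulrDl. Qed.

Lemma dotpZl (t : R) u v : dotp (t *: u) v = t * dotp u v.
Proof. by rewrite /dotp mulr_sumr; apply: eq_bigr => i _; rewrite !mxE mulrA. Qed.

Lemma dotpNl u v : dotp (- u) v = - dotp u v.
Proof. by rewrite -scaleN1r dotpZl mulN1r. Qed.

Lemma dotpDr u v w : dotp w (u + v) = dotp w u + dotp w v.
Proof. by rewrite !(dotpC w) dotpDl. Qed.
Lemma dotpZr (t : R) u v : dotp v (t *: u) = t * dotp v u.
Proof. by rewrite !(dotpC v) dotpZl. Qed.
Lemma dotpNr u v : dotp v (- u) = - dotp v u.
Proof. by rewrite !(dotpC v) dotpNl. Qed.

Lemma dotp_ge0 u : 0 <= dotp u u.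
Proof. by apply: sumr_ge0 => i _; rewrite -expr2 sqr_ge0. Qed.

Lemma dotp_eq0 u : dotp u u = 0 -> u = 0.
Proof.
move=> H; apply/matrixP => i j; rewrite !mxE (ord1 i).
have /eqP := H; rewrite /dotp psumr_eq0; last by move=> l _; rewrite -expr2 sqr_ge0.
move=> /allP /(_ j (mem_index_enum _)) /implyP /(_ isT).
by rewrite mulf_eq0 orbb => /eqP.
Qed.

Lemma enorm_ge0 u : 0 <= enorm u.
Proof. exact: sqrtr_ge0. Qed.

Lemma enorm_sq u : enorm u ^+ 2 = dotp u u.
Proof. by rewrite sqr_sqrtr // dotp_ge0. Qed.

Lemma CS u v : dotp u v ^+ 2 <= dotp u u * dotp v v.
Proof.
have [v0|vn0] := eqVneq (dotp v v) 0.
  have z w : dotp w (0 : 'rV[R]_k) = 0.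
    by rewrite /dotp big1 // => i _; rewrite mxE mulr0.
  by rewrite (dotp_eq0 v0) !z expr0n /= mulr0.
have vp : 0 < dotp v v by rewrite lt_def vn0 dotp_ge0.
set t := dotp u v / dotp v v.
have := dotp_ge0 (u - t *: v).
rewrite dotpDl !dotpDr !dotpNl !dotpNr !dotpZl !dotpZr (dotpC v u).
rewrite /t => H.
have e : dotp u v / dotp v v * (dotp u v / dotp v v * dotp v v) = dotp u v ^+ 2 / dotp v v.
  by field; rewrite vn0.
move: H; rewrite e.
have e2 : dotp u v / dotp v v * dotp u v = dotp u v ^+ 2 / dotp v v by rewrite mulrAC expr2.
rewrite e2 => H.
have : dotp u v ^+ 2 / dotp v v <= dotp u u by lra.
by rewrite ler_pdivrMr.
Qed.

Lemma CSabs u v : `|dotp u v| <= enorm u * enorm v.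
Proof.
rewrite -(@ler_pXn2r _ 2) //= ?nnegrE ?mulr_ge0 ?enorm_ge0 //.
by rewrite real_normK ?num_real // exprMn !enorm_sq CS.
Qed.

Lemma enormZ (t : R) u : enorm (t *: u) = `|t| * enorm u.
Proof. by rewrite /enorm dotpZl dotpZr mulrA -expr2 sqrtrM ?sqr_ge0 // sqrtr_sqr. Qed.

Lemma enormN u : enorm (- u) = enorm u.
Proof. by rewrite -scaleN1r enormZ normrN1 mul1r. Qed.

Lemma enorm_le1 u : (enorm u <= 1) = (dotp u u <= 1).
Proof. by rewrite /enorm -[X in _ <= X]sqrtr1 ler_sqrt. Qed.

Lemma mul_dotp (y x : 'rV[R]_n) : (y *m x^T) 0 0 = dotp y x.
Proof. by rewrite mxE; apply: eq_bigr => i _; rewrite mxE. Qed.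

Lemma det_rank1 (x y : 'rV[R]_n) : \det (1%:M + x^T *m y) = 1 + dotp y x.
Proof.
pose L1 : 'M[R]_(1 + n) := block_mx (1%:M : 'M_1) 0 (- x^T) 1%:M.
pose U1 : 'M[R]_(1 + n) := block_mx (1%:M : 'M_1) y 0 (1%:M + x^T *m y).
pose U2 : 'M[R]_(1 + n) := block_mx (1%:M + y *m x^T : 'M_1) y 0 1%:M.
have E : L1 *m U1 = U2 *m L1.
  rewrite /L1 /U1 /U2 !mulmx_block.
  rewrite !mulmx1 !mul1mx !mulmx0 !mul0mx !addr0 !add0r.
  by rewrite mulmxN mulNmx addrCA addNr addr0 addrK.
have := congr1 (fun M => \det M) E => /=.
rewrite !det_mulmx /L1 /U1 /U2 det_lblock !det_ublock !det1 !mul1r mulr1.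
by move=> ->; rewrite det_mx11 mulr1 mxE mxE mul_dotp.
Qed.
End Basics.

Section Key.
Variable R : realType.
Variable k : nat.

Definition cvx (S : set 'rV[R]_k) := forall x y (t : R), 0 <= t -> t <= 1 ->
  S x -> S y -> S (t *: x + (1 - t) *: y).

Lemma affine_comb (ce X Y : 'rV[R]_k) (A : 'M[R]_k) t :
  ce + (t *: X + (1 - t) *: Y) *m A = t *: (ce + X *m A) + (1 - t) *: (ce + Y *m A).
Proof.
rewrite mulmxDl -!scalemxAl; set XA := X *m A; set YA := Y *m A.
by apply/matrixP => i j; rewrite !mxE; ring.
Qed.

Lemma cone (M' : set 'rV[R]_k) (H u : 'rV[R]_k) (m : R) :
  cvx M' -> (forall u, enorm u <= 1 -> M' u) -> M' H -> dotp H H = m ^+ 2 -> 0 < m ->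
  enorm u <= 1 -> 0 <= dotp u H ->
  M' (2^-1 *: (u + ((m - 1) / m ^+ 2 * dotp u H) *: H)).
Proof.
move=> cM UM MH HH m0 u1 D0.
set D := dotp u H.
have eH : enorm H = m by rewrite /enorm HH sqrtr_sqr gtr0_norm.
have Dle : D <= m.
  have := CSabs u H; rewrite eH => h1.
  have : `|D| <= m by apply: le_trans h1 _; rewrite ler_piMl // ltW.
  by move=> h2; apply: le_trans h2; apply: ler_norm.
set a := D / m.
have a0 : 0 <= a by rewrite divr_ge0 // ltW.
have a1 : a <= 1 by rewrite ler_pdivrMr // mul1r.
have a2 : 2 - a != 0 by apply/eqP; lra.
pose z := (2 - a)^-1 *: (u - (a / m) *: H).
have -> : 2^-1 *: (u + ((m - 1) / m ^+ 2 * D) *: H) = (a / 2) *: H + (1 - a / 2) *: z.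
  rewrite /z /a; apply/matrixP => i j; rewrite !mxE.
  field; apply/andP; split; [exact: lt0r_neq0 | apply/eqP; lra].
apply: (cM H z (a / 2)) => //; [lra | lra |].
apply: UM; rewrite enorm_le1 /z.
rewrite dotpZl dotpZr !dotpDl !dotpDr !dotpNl !dotpNr !dotpZl !dotpZr HH (dotpC H u) -/D.
have uu : dotp u u <= 1 by rewrite -enorm_le1.
have -> : (2 - a)^-1 * ((2 - a)^-1 * (dotp u u - a / m * D + (- (a / m * D) - - (a / m * (a / m * m ^+ 2)))))
   = (dotp u u - a ^+ 2) / (2 - a) ^+ 2.
  rewrite /a; field; apply/andP; split; [exact: lt0r_neq0 | apply/eqP; lra].
rewrite ler_pdivrMr ?exprn_gt0 //; last lra.
nra.
Qed.


Lemma key (M : set 'rV[R]_k) (p : 'rV[R]_k) (r : R) ce (A : 'M[R]_k) :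
  0 < r -> cvx M -> (forall v, M (p + v) -> M (p - v)) -> eball p r `<=` M ->
  max_vol_ellipsoid_in M ce A -> eball p (r / 2 ^+ k) `<=` ellipsoid ce A.
Proof.
move=> r0 cM sM bM [EM maxA].
have dA : 0 < `|\det A|.
  have : ellipsoid p (r%:M) `<=` M.
    move=> _ [u /= u1 <-]; apply: bM; rewrite /eball /= addrC addKr mul_mx_scalar.
    rewrite enormZ gtr0_norm //; rewrite -[X in _ <= X]mulr1; by rewrite ler_pM2l.
  move/maxA; rewrite det_scalar normrX gtr0_norm // => H; apply: lt_le_trans H.
  exact: exprn_gt0.
have uA : A \in unitmx by rewrite unitmxE unitfE -normr_gt0.
pose M' u := M (ce + u *m A).
have cM' : cvx M'.
  by move=> x y t t0 t1 Mx My; rewrite /M' affine_comb; exact: cM.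
have UM' u : enorm u <= 1 -> M' u by move=> u1; apply: EM; exists u.
pose p' := (p - ce) *m invmx A.
have pE : p = ce + p' *m A by rewrite /p' mulmxKV // addrC subrK.
have refl u : enorm u <= 1 -> M' (2 *: p' + u).
  move=> u1; have := sM (ce + (- u) *m A - p); rewrite addrC subrK.
  move=> /(_ (UM' _ _)); rewrite enormN => /(_ u1).
  rewrite /M' [in X in M X -> _]pE mulmxDl -scalemxAl mulNmx.
  set P := p' *m A; set U := u *m A.
  have -> : ce + P - (ce + - U - (ce + P)) = ce + (2 *: P + U).
    by apply/matrixP => i j; rewrite !mxE; ring.
  by [].
have p'0 : p' = 0.
  have [/dotp_eq0 //|nz] := eqVneq (dotp p' p') 0.
  exfalso.
  set m := enorm p'.
  have pp : 0 < dotp p' p' by rewrite lt_def nz dotp_ge0.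
  have m0 : 0 < m by rewrite sqrtr_gt0.
  have mm : dotp p' p' = m ^+ 2 by rewrite enorm_sq.
  pose N1 := 1%:M + p'^T *m (m^-1 *: p').
  have : ellipsoid p (N1 *m A) `<=` M.
    move=> _ [u /= u1 <-].
    set c := dotp u p' / m.
    have c1 : `|c| <= 1.
      rewrite /c normrM normfV (gtr0_norm m0) ler_pdivrMr // mul1r.
      apply: le_trans (CSabs u p') _; rewrite -/m -[X in _ <= X]mul1r.
      by apply: ler_wpM2r => //; exact: ltW.
    have -> : p + u *m (N1 *m A) =
        ce + (((1 + c) / 2) *: (2 *: p' + u) + (1 - (1 + c) / 2) *: u) *m A.
      rewrite pE mulmxA /N1 mulmxDr mulmx1 mulmxA (mx11_scalar (u *m p'^T)).
      rewrite mul_scalar_mx mul_dotp -addrA -mulmxDl; congr (_ + _ *m A).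
      rewrite /c; apply/matrixP => i j; rewrite !mxE.
      field; exact: lt0r_neq0.
    apply: (cM' _ _ ((1 + c) / 2)); last exact: UM'.
    - by move: c1; rewrite ler_norml => /andP[? ?]; lra.
    - by move: c1; rewrite ler_norml => /andP[? ?]; lra.
    - exact: refl.
  move/maxA; rewrite det_mulmx /N1 det_rank1 dotpZl mm normrM.
  have -> : 1 + m^-1 * m ^+ 2 = 1 + m by field; exact: lt0r_neq0.
  rewrite (gtr0_norm (_ : 0 < 1 + m)); last lra.
  nra.
have ceE : ce = p by rewrite pE p'0 mul0mx addr0.
move=> y; rewrite /eball /= => yb.
pose g := (y - p) *m invmx A.
have gA : g *m A = y - p by rewrite /g mulmxKV.
have [g1|g1] := lerP (enorm g) 1.
  by exists g => //; rewrite gA ceE addrC subrK.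
exfalso.
have k2 : (0 : R) < 2 ^+ k by apply: exprn_gt0.
pose h := 2 ^+ k *: g.
set m := enorm h.
have mE : m = 2 ^+ k * enorm g by rewrite /m /h enormZ gtr0_norm.
have m2 : 2 ^+ k < m by rewrite mE -[X in X < _]mulr1 ltr_pM2l.
have m0 : 0 < m by apply: lt_trans m2.
have hh : dotp h h = m ^+ 2 by rewrite enorm_sq.
have vb : eball p r (p + 2 ^+ k *: (y - p)).
  rewrite /eball /= addrC addKr enormZ gtr0_norm //.
  by move: yb; rewrite ler_pdivlMr // mulrC.
have Mh : M' h by rewrite /M' /h -scalemxAl gA ceE; exact: bM.
have Mmh : M' (- h).
  by rewrite /M' /h mulNmx -scalemxAl gA ceE; apply: sM; exact: bM.
pose N2 := 2^-1 *: (1%:M + h^T *m (((m - 1) / m ^+ 2) *: h)).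
have : ellipsoid p (N2 *m A) `<=` M.
  move=> _ [u /= u1 <-]; rewrite mulmxA -ceE.
  have -> : u *m N2 = 2^-1 *: (u + ((m - 1) / m ^+ 2 * dotp u h) *: h).
    rewrite /N2 -scalemxAr mulmxDr mulmx1 mulmxA (mx11_scalar (u *m h^T)).
    by rewrite mul_scalar_mx mul_dotp scalerA mulrC.
  have [D0|D0] := lerP 0 (dotp u h).
    exact: (cone cM' UM' Mh hh m0 u1 D0).
  have hh' : dotp (- h) (- h) = m ^+ 2 by rewrite dotpNl dotpNr opprK.
  have D0' : 0 <= dotp u (- h) by rewrite dotpNr oppr_ge0 ltW.
  have := cone cM' UM' Mmh hh' m0 u1 D0'.
  by rewrite dotpNr scalerN mulrN scaleNr opprK.
move/maxA; rewrite det_mulmx /N2 detZ det_rank1 dotpZl hh normrM.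
have -> : 1 + (m - 1) / m ^+ 2 * m ^+ 2 = m by field; exact: lt0r_neq0.
rewrite normrM normrX gtr0_norm ?invr_gt0 // (gtr0_norm m0).
have : 1 < 2^-1 ^+ k * m.
  by rewrite exprVn mulrC ltr_pdivlMr // mul1r.
nra.
Qed.

End Key.

Section Main.
Variable R : realType.
Variable d : nat.

Definition Lf (a : 'rV[R]_d) (y : 'rV[R]_(d + 1)) := rsubmx y 0 0 + dotp a (lsubmx y).

Lemma LfD a (x y : 'rV[R]_(d + 1)) : Lf a (x + y) = Lf a x + Lf a y.
Proof.
rewrite /Lf; have -> : lsubmx (x + y) = lsubmx x + lsubmx y.
  by apply/matrixP => i j; rewrite !mxE.
by rewrite dotpDr !mxE; ring.
Qed.

Lemma LfZ a t (x : 'rV[R]_(d + 1)) : Lf a (t *: x) = t * Lf a x.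
Proof.
rewrite /Lf; have -> : lsubmx (t *: x) = t *: lsubmx x.
  by apply/matrixP => i j; rewrite !mxE.
by rewrite dotpZr !mxE; ring.
Qed.

Lemma expandedE n (a : 'I_n -> 'rV[R]_d) b eps y :
  expanded a b eps y <-> forall j, Lf (a j) y <= b j + eps.
Proof.
rewrite /expanded /Lf; split => H j; have := H j; lra.
Qed.

Lemma cvx_expanded n (a : 'I_n -> 'rV[R]_d) b eps : cvx (expanded a b eps).
Proof.
move=> x y t t0 t1 /expandedE Hx /expandedE Hy; apply/expandedE => j.
rewrite LfD !LfZ; have := Hx j; have := Hy j; nra.
Qed.

Lemma split_dotp (v : 'rV[R]_(d + 1)) :
  dotp v v = dotp (lsubmx v) (lsubmx v) + rsubmx v 0 0 ^+ 2.
Proof.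
rewrite /dotp big_split_ord big_ord1 expr2; congr (_ + _).
  by apply: eq_bigr => i _; rewrite !mxE.
by rewrite !mxE.
Qed.

Lemma Lf_bound a (v : 'rV[R]_(d + 1)) : enorm a = 1 -> `|Lf a v| <= 2 * enorm v.
Proof.
move=> a1; rewrite /Lf.
have h1 : `|rsubmx v 0 0| <= enorm v.
  rewrite -sqrtr_sqr /enorm; apply: ler_wsqrtr; rewrite split_dotp.
  by rewrite lerDr dotp_ge0.
have h2 : `|dotp a (lsubmx v)| <= enorm v.
  apply: le_trans (CSabs _ _) _; rewrite a1 mul1r /enorm; apply: ler_wsqrtr.
  by rewrite split_dotp lerDl sqr_ge0.
apply: le_trans (ler_normD _ _) _; lra.
Qed.

End Main.

Theorem lemma8 (R : realType) (d : nat) (lamc : R) :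
  0 < lamc < 1 ->
  exists c : R, 0 < c /\
  forall (n : nat) (a : 'I_n -> 'rV[R]_d) (b : 'I_n -> R) (eps : R),
    (forall j, enorm (a j) = 1) ->
    (forall j, 0 < b j) ->
    (* origin in the interior of Omega *)
    (exists r : R, 0 < r /\ eball 0 r `<=` polytope a b) ->
    (* Omega has unit diameter *)
    (forall x y, polytope a b x -> polytope a b y -> enorm (x - y) <= 1) ->
    (forall e : R, 0 < e -> exists x y, polytope a b x /\ polytope a b y /\
                               1 - e < enorm (x - y)) ->
    0 < eps ->
    forall (p : 'rV[R]_(d + 1)), lifted a b p ->
    forall (ce : 'rV[R]_(d + 1)) (A : 'M[R]_(d + 1)),
      max_vol_ellipsoid_in (macbeath (expanded a b eps) p lamc) ce A ->
      eball p (c * eps) `<=` ellipsoid ce A.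
Proof.
move=> /andP[l0 l1].
have k2 : (0 : R) < 2 ^+ (d + 1) by apply: exprn_gt0.
exists (lamc / 2 / 2 ^+ (d + 1)); split.
  by rewrite !divr_gt0.
move=> n a b eps a1 _ _ _ _ e0 p [_ pL] ce A mx.
set K := expanded a b eps.
set M := macbeath K p lamc.
have cK : cvx K := @cvx_expanded R d n a b eps.
have cM : cvx M.
  move=> _ _ t t0 t1 [v1 [Kv1 Kv1'] <-] [v2 [Kv2 Kv2'] <-].
  exists (t *: v1 + (1 - t) *: v2); last first.
    by apply/matrixP => i j; rewrite !mxE; ring.
  split.
    have -> : p + (t *: v1 + (1 - t) *: v2) = t *: (p + v1) + (1 - t) *: (p + v2).
      by apply/matrixP => i j; rewrite !mxE; ring.
    exact: cK.
  have -> : p - (t *: v1 + (1 - t) *: v2) = t *: (p - v1) + (1 - t) *: (p - v2).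
    by apply/matrixP => i j; rewrite !mxE; ring.
  exact: cK.
have sM v : M (p + v) -> M (p - v).
  move=> [w [Kw Kw'] e]; exists (- w).
    split => //; by rewrite (opprK w).
  by move/addrI: e => <-; rewrite scalerN.
have r0 : 0 < lamc * eps / 2 by rewrite divr_gt0 // mulr_gt0.
have bM : eball p (lamc * eps / 2) `<=` M.
  move=> y; rewrite /eball /= => yb.
  pose v := lamc^-1 *: (y - p).
  have ev : enorm v <= eps / 2.
    rewrite /v enormZ gtr0_norm ?invr_gt0 // mulrC ler_pdivrMr //.
    by have -> : eps / 2 * lamc = lamc * eps / 2 by ring.
  have Lv j : `|Lf (a j) v| <= eps.
    by apply: le_trans (Lf_bound v (a1 j)) _; lra.
  have Lp j : Lf (a j) p <= b j by have := pL j; rewrite /Lf; lra.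
  exists v.
    split; apply/expandedE => j.
      by rewrite LfD; have := Lv j; have := Lp j; rewrite ler_norml => ? /andP[? ?]; lra.
    rewrite -scaleN1r LfD LfZ; have := Lv j; have := Lp j; rewrite ler_norml => ? /andP[? ?]; lra.
  rewrite /v scalerA divff ?scale1r; last exact: lt0r_neq0.
  by rewrite addrC subrK.
have := key r0 cM sM bM mx.
have -> : lamc / 2 / 2 ^+ (d + 1) * eps = lamc * eps / 2 / 2 ^+ (d + 1).
  by ring.
by [].
Qed.
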